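(* Let $G=(V,E,w)$ be a connected weighted undirected graph, let $T$ be a spanning tree of $G$ rooted at a vertex $r$, and let $c\ge 0$ be an integer. Let $e=(u,v)$ and $e'=(u',v')$ be off-tree edges (edges of $G$ not in $T$, with $u\neq v$ and $u'\neq v'$). If $e'$ is strictly similar to $e$ (in the sense defined below), then $\operatorname{LCA}_T(u,v)=\operatorname{LCA}_T(u',v')$. Equivalently, if $\operatorname{LCA}_T(u,v)\neq \operatorname{LCA}_T(u',v')$, then $e'$ is not strictly similar to $e$.
   Context: $\operatorname{LCA}_T(x,y)$ denotes the lowest common ancestor of $x,y$ in the tree $T$ rooted at $r$. $\operatorname{dist}_T(x,y)$ denotes the unweighted (hop) distance between $x$ and $y$ in $T$. For a vertex $x$ and integer $\beta\ge 0$, the $\beta$-hop neighborhood is $S_{x,\beta}=\{y\in V:\operatorname{dist}_T(x,y)\le\beta\}$. For an off-tree edge $e=(u,v)$ define $\beta^*_{u,v}=\min\{\operatorname{dist}_T(u,\operatorname{LCA}_T(u,v)),\ \operatorname{dist}_T(v,\operatorname{LCA}_T(u,v)),\ c\}$. An off-tree edge $e'=(u',v')$ is strictly similar to the off-tree edge $e=(u,v)$ if, with $\beta^*=\beta^*_{u,v}$, $(u'\in S_{u,\beta^*}\wedge v'\in S_{v,\beta^*})\vee(u'\in S_{v,\beta^*}\wedge v'\in S_{u,\beta^*})$. (Note the relation is defined relative to $e$: the neighborhoods and $\beta^*$ are those of $e$.) *)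

(* Defs.v *)
From mathcomp Require Import all_boot.
Set Implicit Arguments. Unset Strict Implicit. Unset Printing Implicit Defensive.

Section Graphs.
Variable V : finType.

Definition simple_graph (g : rel V) : Prop :=
  symmetric g /\ irreflexive g.

Definition connected_graph (g : rel V) : Prop :=
  forall x y : V, connect g x y.

(* acyclic: no simple cycle  x -> s_1 -> ... -> s_k -> x  with k >= 2
   (i.e. of length >= 3; shorter closed walks are excluded by simplicity). *)
Definition acyclic (t : rel V) : Prop :=
  ~ exists (x : V) (s : seq V),
      [/\ 2 <= size s, uniq (x :: s), path t x s & t (last x s) x].

Definition spanning_tree (g t : rel V) : Prop :=
  [/\ simple_graph t, subrel t g, connected_graph t & acyclic t].

Definition walkn (t : rel V) (x y : V) (n : nat) : bool :=
  [exists s : n.-tuple V, path t x s && (last x s == y)].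

(* unweighted (hop) distance in t: the least n such that a walk of length n
   from x to y exists (a shortest walk is a simple path, so n < #|V| when
   x and y are connected; the value #|V| is returned otherwise). *)
Definition hop_dist (t : rel V) (x y : V) : nat :=
  \big[minn/#|V|]_(n < #|V| | walkn t x y n) (n : nat).

Definition ancestor (t : rel V) (r a x : V) : Prop :=
  exists s : seq V,
    [/\ path t x s, last x s = r, uniq (x :: s) & a \in x :: s].

Definition is_LCA (t : rel V) (r l x y : V) : Prop :=
  [/\ ancestor t r l x, ancestor t r l y &
      forall a, ancestor t r a x -> ancestor t r a y -> ancestor t r a l].

Definition beta_star (t : rel V) (c : nat) (u v l : V) : nat :=
  minn (minn (hop_dist t u l) (hop_dist t v l)) c.

Definition hop_nbhd (t : rel V) (x : V) (beta : nat) : {set V} :=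
  [set y | hop_dist t x y <= beta].

(* e' = (u',v') is strictly similar to e = (u,v), where l = LCA_T(u,v) *)
Definition strictly_similar (t : rel V) (c : nat) (u v l u' v' : V) : Prop :=
  let b := beta_star t c u v l in
  (u' \in hop_nbhd t u b /\ v' \in hop_nbhd t v b) \/
  (u' \in hop_nbhd t v b /\ v' \in hop_nbhd t u b).

End Graphs.

(* Main.v *)
Require Import Defs.
From mathcomp Require Import all_boot zify.
Set Implicit Arguments. Unset Strict Implicit. Unset Printing Implicit Defensive.

Lemma first_in (T : eqType) (B : pred T) (s : seq T) : has B s ->
  exists p1 z p2, [/\ s = p1 ++ z :: p2, B z & ~~ has B p1].
Proof.
elim: s => //= y s IH.
case: (boolP (B y)) => By /=.
  by exists [::], y, s.
move=> /IH [p1 [z [p2 [-> Bz hp]]]].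
by exists (y :: p1), z, p2; rewrite /= (negbTE By) hp.
Qed.

Lemma in_split (T : eqType) (z : T) (s : seq T) : z \in s ->
  exists s1 s2, s = s1 ++ z :: s2.
Proof. by case/splitPr => s1 s2; exists s1, s2. Qed.

Lemma path_unique (V : finType) (t : rel V) : symmetric t -> acyclic t ->
  forall x p q, path t x p -> path t x q -> uniq (x :: p) -> uniq (x :: q) ->
  last x p = last x q -> p = q.
Proof.
move=> tsym tac x p; elim: p x => [|a p IH] x q.
  case: q => //= b q _ _ _ /andP[xn _] Hl; exfalso.
  by move: xn; rewrite Hl mem_last.
case: q => [|b q].
  move=> _ _ /andP[xn _] _ /= Hl; exfalso.
  by move: xn; rewrite -Hl mem_last.
move=> /= /andP[xa pa] /andP[xb qb] Up Uq Hl.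
case: (eqVneq a b) => [eab|nab].
  subst b; congr cons; apply: (IH a) => //.
    by case/andP: Up.
  by case/andP: Uq.
exfalso; apply: tac.
have hh : has (mem (b :: q)) (a :: p).
  by apply/hasP; exists (last a p); [exact: mem_last | rewrite /= Hl; exact: mem_last].
have [p1 [z [p2 [Ep zin hp]]]] := first_in hh.
have [q1 [q2 Eq]] := in_split zin.
have Pp : path t x (a :: p) by rewrite /= xa.
have Pq : path t x (b :: q) by rewrite /= xb.
move: Pp; rewrite Ep cat_path => /andP[P1 /= /andP[P1z _]].
move: Pq; rewrite Eq cat_path => /andP[Q1 /= /andP[Q1z _]].
have Q1r : path t x (rcons q1 z) by rewrite rcons_path Q1 Q1z.
have := Q1r; rewrite -rev_path belast_rcons last_rcons rev_cons.
rewrite (eq_path (e' := t)); last by move=> u w /=; rewrite tsym.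
rewrite rcons_path => /andP[Rq Rl].
have {}Up : uniq (x :: p1 ++ z :: p2) by rewrite -Ep.
have {}Uq : uniq (x :: q1 ++ z :: q2) by rewrite -Eq.
have Us : uniq (x :: p1 ++ z :: rev q1).
  rewrite -cat_rcons -cat_cons cat_uniq rev_uniq.
  move: Up; rewrite -cat_rcons -cat_cons cat_uniq => /and3P [U1' _ _].
  rewrite U1' /=.
  move: Uq; rewrite /= mem_cat negb_or cat_uniq /= => /andP[/andP[xq1 _] /and3P[uq1 /norP[zq1 _] _]].
  rewrite uq1 andbT has_rev; apply/hasPn => y yq1.
  rewrite /= in_cons mem_rcons in_cons negb_or; apply/andP; split.
    by apply/eqP => yx; subst y; rewrite yq1 in xq1.
  rewrite negb_or; apply/andP; split.
    by apply/eqP => yz; subst y; rewrite yq1 in zq1.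
  apply/negP => yp1; move/hasPn: hp => /(_ y yp1) /=.
  by rewrite Eq mem_cat yq1.
have Ps : path t x (p1 ++ z :: rev q1) by rewrite cat_path P1 /= P1z.
have Ls : t (last x (p1 ++ z :: rev q1)) x by rewrite last_cat /=.
exists x, (p1 ++ z :: rev q1); split => //.
clear -Ep Eq nab; move: Ep Eq nab; case: p1 => [|a1 p1'] /=; last by rewrite size_cat /= addnS.
case=> <- _; case: q1 => [|b1 q1'] /=; first by case=> <-; rewrite eqxx.
by rewrite size_rev.
Qed.

Definition rpath (V : finType) (t : rel V) (r x : V) (s : seq V) :=
  [&& path t x s, uniq (x :: s) & last x s == r].

Lemma rpath_ex (V : finType) (t : rel V) r x : connected_graph t -> exists s, rpath t r x s.
Proof.
move=> /(_ x r) /connectP [p Pp Lp].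
case: (shortenP Pp) Lp => p' Pp' Up' _ Lp'.
by exists p'; rewrite /rpath Pp' Up' Lp' eqxx.
Qed.

Lemma rpath_uniq (V : finType) (t : rel V) r x s s' : symmetric t -> acyclic t ->
  rpath t r x s -> rpath t r x s' -> s = s'.
Proof.
move=> ts ta /and3P[P U /eqP L] /and3P[P' U' /eqP L'].
exact: (path_unique ts ta P P' U U' (etrans L (esym L'))).

Qed.

Lemma rpath_suffix (V : finType) (t : rel V) r x s s1 b s2 :
  rpath t r x s -> x :: s = s1 ++ b :: s2 -> rpath t r b s2.
Proof.
move=> R; case: s1 => [|y s1] /=; first by case=> <- <-.
case=> ex es; move: R; rewrite /rpath es cat_path last_cat /= => /and3P[/andP[_ /andP[_ ->]]].
by move=> /andP[_]; rewrite cat_uniq => /and3P[_ _ /= ->] ->.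
Qed.

Lemma ancE (V : finType) (t : rel V) r a x s : symmetric t -> acyclic t ->
  rpath t r x s -> (ancestor t r a x <-> a \in x :: s).
Proof.
move=> ts ta R; split.
  case=> s' [P U L ain].
  have R' : rpath t r x s' by rewrite /rpath P U L eqxx.
  by rewrite (rpath_uniq ts ta R R').
move=> ain; case/and3P: R => P U /eqP L; by exists s.
Qed.

Lemma ancR (V : finType) (t : rel V) r x s : rpath t r x s -> ancestor t r x x.
Proof. by case/and3P => P U /eqP L; exists s; rewrite mem_head. Qed.


Lemma anc_trans (V : finType) (t : rel V) r a b x : symmetric t -> acyclic t ->
  ancestor t r a b -> ancestor t r b x -> ancestor t r a x.
Proof.
move=> ts ta Hab Hbx.
have [s [P U L bin]] := Hbx.
have R : rpath t r x s by rewrite /rpath P U L eqxx.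
have [s1 [s2 E]] := in_split bin.
have Rb := rpath_suffix R E.
apply/(ancE _ ts ta R); rewrite E mem_cat.
by move/(ancE _ ts ta Rb): Hab => ->; rewrite orbT.
Qed.

Lemma anc_lin (V : finType) (t : rel V) r a b x : symmetric t -> acyclic t ->
  ancestor t r a x -> ancestor t r b x -> ancestor t r a b \/ ancestor t r b a.
Proof.
move=> ts ta Hax Hbx.
have [s [P U L ain]] := Hax.
have R : rpath t r x s by rewrite /rpath P U L eqxx.
have bin : b \in x :: s by apply/(ancE _ ts ta R).
have [s1 [s2 E]] := in_split ain.
have Ra := rpath_suffix R E.
move: bin; rewrite E mem_cat => /orP[bs1|bs2].
  have [s3 [s4 E2]] := in_split bs1.
  have E3 : x :: s = s3 ++ b :: (s4 ++ a :: s2) by rewrite E E2 -catA.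
  have Rb := rpath_suffix R E3.
  by left; apply/(ancE _ ts ta Rb); rewrite in_cons mem_cat in_cons eqxx !orbT.
by right; apply/(ancE _ ts ta Ra).
Qed.

Lemma anc_antisym (V : finType) (t : rel V) r a b : symmetric t -> acyclic t ->
  ancestor t r a b -> ancestor t r b a -> a = b.
Proof.
move=> ts ta Hab Hba.
have [s [P U L ain]] := Hab.
have Rb : rpath t r b s by rewrite /rpath P U L eqxx.
have [s1 [s2 E]] := in_split ain.
have Ra := rpath_suffix Rb E.
have bin : b \in a :: s2 by apply/(ancE _ ts ta Ra).
have [s3 [s4 E2]] := in_split bin.
have Rb' := rpath_suffix Ra E2.
have es : s4 = s by apply: (rpath_uniq ts ta Rb' Rb).
have : size (b :: s) = size (s1 ++ s3 ++ b :: s4) by rewrite E -E2.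
rewrite es !size_cat /= => H.
move/eqP: H; rewrite addnA -{1}[(size s).+1]add0n eqn_add2r eq_sym addn_eq0 => /andP[/eqP h1 _].
by case: s1 E h1 => //= - [->].
Qed.

Lemma decomp (T : eqType) (x : T) p1 p2 :
  x :: p1 ++ p2 = belast x p1 ++ last x p1 :: p2.
Proof. by rewrite -cat_cons lastI cat_rcons. Qed.

Lemma idx_last (T : eqType) (x : T) p1 p2 : uniq (x :: p1 ++ p2) ->
  index (last x p1) (x :: p1 ++ p2) = size p1.
Proof.
rewrite decomp cat_uniq => /and3P[_ hn _].
have hl : last x p1 \notin belast x p1.
  by apply/negP => hin; move/hasPn: hn => /(_ (last x p1) (mem_head _ _)); rewrite hin.
by rewrite index_cat (negbTE hl) /= eqxx addn0 size_belast.
Qed.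

Lemma walkn_intro (V : finType) (t : rel V) x s :
  path t x s -> walkn t x (last x s) (size s).
Proof.
move=> P; apply/existsP; exists (@Tuple (size s) V s (eqxx _)) => /=.
by rewrite P eqxx.
Qed.

Lemma walkn_elim (V : finType) (t : rel V) x y n : walkn t x y n ->
  exists s, [/\ size s = n, path t x s & last x s = y].
Proof.
case/existsP => s /andP[P /eqP L]; exists (tval s); split => //.
exact: size_tuple.
Qed.

Lemma bigmin_le (I : eqType) (r : seq I) (P : pred I) (F : I -> nat) N j :
  j \in r -> P j -> \big[minn/N]_(i <- r | P i) F i <= F j.
Proof.
elim: r => // a r IH; rewrite in_cons big_cons => /orP[/eqP <-|jr] Pj.
  by rewrite Pj geq_minl.
case: (P a); last exact: IH.
exact: leq_trans (geq_minr _ _) (IH jr Pj).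
Qed.

Lemma hop_le (V : finType) (t : rel V) x s : path t x s -> size s < #|V| ->
  hop_dist t x (last x s) <= size s.
Proof.
move=> P hs; rewrite /hop_dist.
exact: (bigmin_le (fun n : 'I_#|V| => n : nat) #|V| (mem_index_enum (Ordinal hs)) (walkn_intro P)).
Qed.

Lemma hop_walk (V : finType) (t : rel V) x y : hop_dist t x y < #|V| ->
  exists s, [/\ size s = hop_dist t x y, path t x s & last x s = y].
Proof.
move=> h.
have : hop_dist t x y = #|V| \/ walkn t x y (hop_dist t x y).
  rewrite /hop_dist; apply: (big_ind (fun v => v = #|V| \/ walkn t x y v)); first by left.
    move=> a b Ha Hb /=; have [hab|hab] := leqP a b.
      by [].
    by [].
  by move=> i Hi; right.
case=> [e|]; first by rewrite e ltnn in h.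
exact: walkn_elim.
Qed.

Lemma uniq_size_card (V : finType) (s : seq V) : uniq s -> size s <= #|V|.
Proof. by move/card_uniqP <-; exact: max_card. Qed.

Lemma split_last (T : eqType) (x z : T) s : z \in x :: s ->
  exists b1 b2, s = b1 ++ b2 /\ last x b1 = z.
Proof. by case/splitPl => b1 b2 <-; exists b1, b2. Qed.

Lemma first_last (T : eqType) (B : pred T) x s : has B (x :: s) ->
  exists a1 a2, [/\ s = a1 ++ a2, B (last x a1) & ~~ has B (belast x a1)].
Proof.
case/first_in => a1 [w [a2 [E Bw hn]]].
move: E hn; case: a1 => [|y a1] /=.
  by case=> ex es _; exists [::], s; split => //; rewrite /= ex.
case=> <- ->; move=> hn; exists (rcons a1 w), a2.
by rewrite cat_rcons last_rcons belast_rcons.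
Qed.

Lemma last_rev_belast (T : Type) (x : T) a :
  last (last x a) (rev (belast x a)) = x.
Proof. by case: a => //= y a; rewrite rev_cons last_rcons. Qed.

Lemma geo (V : finType) (t : rel V) r x x' l :
  symmetric t -> acyclic t -> connected_graph t ->
  ancestor t r l x -> hop_dist t x x' <= hop_dist t x l ->
  x' = l \/ exists w, [/\ ancestor t r w x', ancestor t r w x,
                          ~ ancestor t r w l & ancestor t r l w].
Proof.
move=> ts ta tc Hl Hd.
have [s R] := rpath_ex r x tc.
have lin : l \in x :: s by apply/(ancE _ ts ta R).
case/splitPl: lin R => s1 s2 El R.
have /and3P[Ps Us /eqP Ls] := R.
have Ps1 : path t x s1 by move: Ps; rewrite cat_path => /andP[].
have Hsz : size s1 < #|V|.
  apply: leq_trans (uniq_size_card Us); by rewrite /= size_cat ltnS leq_addr.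
have Hk : hop_dist t x l <= size s1 by rewrite -El; exact: hop_le.
have Hdk : hop_dist t x x' <= size s1 := leq_trans Hd Hk.
have [wk [Swk Pwk Lwk]] := hop_walk (leq_ltn_trans Hdk Hsz).
case: (shortenP Pwk) Lwk => q Pq Uq Sq Lq.
have Sz : size q <= size s1.
  apply: leq_trans Hdk; rewrite -Swk; apply: uniq_leq_size => //; by case/andP: Uq.
have [s' R'] := rpath_ex r x' tc.
have /and3P[Ps' Us' /eqP Ls'] := R'.
have hh : has (mem (x :: s1 ++ s2)) (x' :: s').
  apply/hasP; exists r; first by rewrite -Ls'; exact: mem_last.
  by rewrite -Ls; exact: mem_last.
have [a1 [a2 [Ea Bw hn]]] := first_last hh.
set w := last x' a1 in Bw hn.
have [b1 [b2 [Eb Ew]]] := split_last Bw.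
set c := b1 ++ rev (belast x' a1).
have Pc : path t x c.
  rewrite /c cat_path; move: Ps; rewrite Eb cat_path => /andP[-> _] /=.
  rewrite Ew -/w /w rev_path (eq_path (e' := t)); last by move=> y z /=; rewrite ts.
  by move: Ps'; rewrite Ea cat_path => /andP[].
have Lc : last x c = x' by rewrite /c last_cat Ew /w last_rev_belast.
have Uc : uniq (x :: c).
  rewrite /c -cat_cons cat_uniq rev_uniq.
  have Ub1 : uniq (x :: b1) by move: Us; rewrite Eb -cat_cons cat_uniq => /andP[].
  have Ua1 : uniq (belast x' a1).
    by move: Us'; rewrite Ea -cat_cons lastI -cats1 -!catA cat_uniq => /andP[].
  rewrite Ub1 Ua1 andbT has_rev; apply/hasPn => y yin; apply/negP => yb.
  move/hasPn: hn => /(_ y yin) /=; rewrite Eb -cat_cons mem_cat.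
  by move: yb; rewrite /= => ->.
have Eqc : q = c by apply: (path_unique ts ta Pq Pc Uq Uc); rewrite Lq Lc.
have Szc : size b1 + size a1 <= size s1.
  by move: Sz; rewrite Eqc /c size_cat size_rev size_belast.
set L := x :: s1 ++ s2.
have IL : index l L = size s1 by rewrite /L -El idx_last.
have IW : index w L = size b1 by rewrite /L Eb -Ew idx_last // -Eb.
have lL : l \in L by rewrite /L -El -cat_cons mem_cat mem_last.
have wL : w \in L by [].
have neq : w = l -> size b1 = size s1 by move=> e; rewrite -IW -IL e.
have : size b1 <= size s1 by apply: leq_trans Szc; exact: leq_addr.
rewrite leq_eqVlt => /orP[/eqP eb|lb].
  left.
  have a10 : size a1 = 0.
    by move: Szc; rewrite eb -{2}[size s1]addn0 leq_add2l leqn0 => /eqP.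
  have ewl : w = l by rewrite -(nth_index x wL) -(nth_index x lL) IW IL eb.
  by move: ewl; rewrite /w (size0nil a10).
right; exists w; split.
- apply/(ancE _ ts ta R'); rewrite Ea -cat_cons mem_cat; apply/orP; left.
  exact: mem_last.
- exact/(ancE _ ts ta R).
- move=> h.
  have Rw : rpath t r w b2 by apply: (rpath_suffix (s1 := belast x b1) R); rewrite Eb -Ew decomp.
  have hlw : ancestor t r l w.
    apply/(ancE _ ts ta Rw).
    have : l \in belast x b1 ++ w :: b2 by rewrite -Ew -decomp -Eb.
    rewrite mem_cat => /orP[lb1|//].
    have : index l L < size b1.
      by rewrite /L Eb decomp Ew index_cat lb1 -(size_belast x b1) index_mem.
    by rewrite IL ltnNge ltnW.
  by have := neq (anc_antisym ts ta h hlw) => e; rewrite e ltnn in lb.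
- have Rw : rpath t r w b2 by apply: (rpath_suffix (s1 := belast x b1) R); rewrite Eb -Ew decomp.
  apply/(ancE _ ts ta Rw).
  have : l \in belast x b1 ++ w :: b2 by rewrite -Ew -decomp -Eb.
  rewrite mem_cat => /orP[lb1|//].
  have : index l L < size b1.
    by rewrite /L Eb decomp Ew index_cat lb1 -(size_belast x b1) index_mem.
  by rewrite IL ltnNge ltnW.
Qed.

Lemma core (V : finType) (t : rel V) r x y x' y' l l' :
  symmetric t -> acyclic t -> connected_graph t ->
  is_LCA t r l x y -> is_LCA t r l' x' y' ->
  hop_dist t x x' <= hop_dist t x l -> hop_dist t y y' <= hop_dist t y l ->
  l = l'.
Proof.
move=> ts ta tc [Lx Ly Lc] [Lx' Ly' Lc'] Hx Hy.
have Hgx := geo ts ta tc Lx Hx.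
have Hgy := geo ts ta tc Ly Hy.
have anc_self : forall z, ancestor t r z z.
  by move=> z; have [s R] := rpath_ex r z tc; exact: ancR R.
have lx' : ancestor t r l x'.
  case: Hgx => [->|[w [h1 _ _ h4]]]; first exact: anc_self.
  exact: anc_trans ts ta h4 h1.
have ly' : ancestor t r l y'.
  case: Hgy => [->|[w [h1 _ _ h4]]]; first exact: anc_self.
  exact: anc_trans ts ta h4 h1.
have l_l' : ancestor t r l l' := Lc' l lx' ly'.
apply: (anc_antisym ts ta l_l').
case: Hgx => [ex|[cu [cux' cux cul _]]]; first by rewrite -ex.
case: Hgy => [ey|[cv [cvy' cvy cvl _]]]; first by rewrite -ey.
case: (anc_lin ts ta Lx' cux') => [a_cu|cu_a].
- have a_u : ancestor t r l' x := anc_trans ts ta a_cu cux.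
  case: (anc_lin ts ta Ly' cvy') => [a_cv|cv_a].
    exact: Lc _ a_u (anc_trans ts ta a_cv cvy).
  exfalso; apply: cvl; apply: Lc => //.
  exact: anc_trans ts ta (anc_trans ts ta cv_a a_cu) cux.
- have cu_y' : ancestor t r cu y' := anc_trans ts ta cu_a Ly'.
  exfalso.
  case: (anc_lin ts ta cu_y' cvy') => [cu_cv|cv_cu].
    by apply: cul; apply: Lc => //; exact: anc_trans ts ta cu_cv cvy.
  by apply: cvl; apply: Lc => //; exact: anc_trans ts ta cv_cu cux.
Qed.

Theorem mainTheorem1 (V : finType) (g t : rel V) (r : V) (c : nat)
    (u v u' v' l l' : V) :
    simple_graph g -> connected_graph g -> spanning_tree g t ->
    g u v -> ~~ t u v -> u != v ->
    g u' v' -> ~~ t u' v' -> u' != v' ->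
    is_LCA t r l u v -> is_LCA t r l' u' v' ->
    strictly_similar t c u v l u' v' ->
    l = l'.
Proof.
move=> _ _ [[ts _] _ tc ta] _ _ _ _ _ _ HL HL'.
have bu : beta_star t c u v l <= hop_dist t u l.
  exact: leq_trans (geq_minl _ _) (geq_minl _ _).
have bv : beta_star t c u v l <= hop_dist t v l.
  exact: leq_trans (geq_minl _ _) (geq_minr _ _).
rewrite /strictly_similar !inE => -[[h1 h2]|[h1 h2]].
  exact: core ts ta tc HL HL' (leq_trans h1 bu) (leq_trans h2 bv).
have HLs : is_LCA t r l v u by case: HL => a b cc; split => // z hz1 hz2; exact: cc.
exact: core ts ta tc HLs HL' (leq_trans h1 bv) (leq_trans h2 bu).
Qed.
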